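(* Consider an AoI SHS as in the context with matrices $\mathbf{D}$ and $\mathbf{R}$ as defined there, and let $\bar{\mathbf{v}}^{0}=[\bar{\mathbf{v}}^{0}_{0}\ \cdots\ \bar{\mathbf{v}}^{0}_{q_{\max}}]$ be the stationary (duplicated) state-probability row vector. If $\bar{\mathbf{v}}^{0}>\mathbf{0}$ (componentwise) and there exists a non-negative row vector $\bar{\mathbf{v}}^{1}\in\mathbb{R}^{n|\mathcal{Q}|}$ solving $\bar{\mathbf{v}}^{1}\mathbf{D}=\bar{\mathbf{v}}^{0}+\bar{\mathbf{v}}^{1}\mathbf{R}$, then all eigenvalues of $\mathbf{R}-\mathbf{D}$ have strictly negative real parts.
   Context: An AoI SHS: discrete state $q(t)\in\mathcal{Q}=\{0,\ldots,q_{\max}\}$ is a finite-state continuous-time Markov chain with transitions $l\in\mathcal{L}$ from $q_l$ to $q'_l$ at fixed rates $\lambda^{(l)}>0$ (self-transitions and parallel transitions allowed); the continuous state $\mathbf{x}(t)\in\mathbb{R}^n$ grows at unit rate in each component between transitions and is reset to $\mathbf{x}\mathbf{A}_l$ at transition $l$, where $\mathbf{A}_l$ is an $n\times n$ binary matrix with at most one $1$ per column. Let $d_{\bar q}=\sum_{l:q_l=\bar q}\lambda^{(l)}$, $\mathbf{D}=\mathrm{diag}(d_0\mathbf{I}_n,\ldots,d_{q_{\max}}\mathbf{I}_n)$ (an $n|\mathcal{Q}|\times n|\mathcal{Q}|$ matrix), and let $\mathbf{R}$ be the block matrix with $n\times n$ blocks $\mathbf{R}_{i,j}=\sum_{l\in\mathcal{L}_{i,j}}\lambda^{(l)}\mathbf{A}_l$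 for $i,j\in\mathcal{Q}$, where $\mathcal{L}_{i,j}=\{l: q_l=i,q'_l=j\}$. The vector $\bar{\mathbf{v}}^{0}_{\bar q}=[1\ \cdots\ 1]\pi_{\bar q}\in\mathbb{R}^n$, where $\pi$ is a stationary distribution of $q(t)$. *)

(* Defs.v *)
(* Real scalars: any real closed field R (e.g. the reals);
   eigenvalues are taken in the complex numbers R[i] (mathcomp-real-closed). *)
From HB Require Import structures.
From mathcomp Require Import all_boot all_order all_algebra.
From mathcomp Require Export complex.
Set Implicit Arguments. Unset Strict Implicit. Unset Printing Implicit Defensive.
Import Order.TTheory GRing.Theory Num.Theory.
Local Open Scope ring_scope.

(* An AoI SHS with discrete states Q = 'I_Qn (Qn = q_max + 1), transitions
   l : 'I_L from src l to dst l at rate lam l, continuous state of dimension n,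
   reset matrices A l : 'M_n. *)

Definition reset_mx (R : rcfType) (n : nat) (A : 'M[R]_n) : Prop :=
  (forall i j, A i j = 0 \/ A i j = 1) /\
  (forall j i i', A i j = 1 -> A i' j = 1 -> i = i').

Definition exit_rate (R : rcfType) (Qn L : nat) (src : 'I_L -> 'I_Qn)
  (lam : 'I_L -> R) (q : 'I_Qn) : R :=
  \sum_(l < L | src l == q) lam l.

Definition generator (R : rcfType) (Qn L : nat) (src dst : 'I_L -> 'I_Qn)
  (lam : 'I_L -> R) : 'M[R]_Qn :=
  \matrix_(i, j) ((\sum_(l < L | (src l == i) && (dst l == j)) lam l)
                  - (i == j)%:R * exit_rate src lam i).

Definition stationary_dist (R : rcfType) (Qn L : nat) (src dst : 'I_L -> 'I_Qn)
  (lam : 'I_L -> R) (pi : 'rV[R]_Qn) : Prop :=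
  (forall q, 0 <= pi 0 q) /\ \sum_q pi 0 q = 1 /\
  pi *m generator src dst lam = 0.

Definition shsD (R : rcfType) (n Qn L : nat) (src : 'I_L -> 'I_Qn)
  (lam : 'I_L -> R) : 'M[R]_(\sum_(q < Qn) n) :=
  \mxdiag_(q < Qn) ((exit_rate src lam q)%:M : 'M[R]_n).

Definition shsR (R : rcfType) (n Qn L : nat) (src dst : 'I_L -> 'I_Qn)
  (lam : 'I_L -> R) (A : 'I_L -> 'M[R]_n) : 'M[R]_(\sum_(q < Qn) n) :=
  \mxblock_(i < Qn, j < Qn)
    (\sum_(l < L | (src l == i) && (dst l == j)) lam l *: A l : 'M[R]_n).

Definition shsv0 (R : rcfType) (n Qn : nat) (pi : 'rV[R]_Qn)
  : 'rV[R]_(\sum_(q < Qn) n) :=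
  \mxrow_(q < Qn) (const_mx (pi 0 q) : 'rV[R]_n).

(* Main.v *)
Require Import Defs.
From HB Require Import structures.
From mathcomp Require Import all_boot all_order all_algebra.
From mathcomp Require Import complex.
From mathcomp Require Import ring.
Import Order.TTheory GRing.Theory Num.Theory.
Local Open Scope ring_scope.
Import ComplexField.Normc.

Section Gen.
Variable R : rcfType.

Lemma normc_sum (I : Type) (r : seq I) (P : pred I) (F : I -> R[i]) :
  normc (\sum_(i <- r | P i) F i) <= \sum_(i <- r | P i) normc (F i).
Proof.
elim/big_rec2: _ => [|i y1 y2 _ IH]; first by rewrite normc0.
exact: le_trans (le_normcD _ _) (lerD (lexx _) IH).
Qed.

Lemma normc_real (x : R) : normc (x%:C%C) = `|x|.
Proof. by rewrite /normc /= expr0n /= addr0 sqrtr_sqr. Qed.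

Lemma normc_ge0 (x : R[i]) : (0 : R) <= normc x.
Proof. by case: x => a b; rewrite /normc sqrtr_ge0. Qed.

Lemma Re_le_normc (x : R[i]) : @complex.Re R x <= normc x.
Proof.
case: x => a b /=; apply: le_trans (ler_norm a) _.
rewrite -sqrtr_sqr ler_sqrt ?lerDl ?sqr_ge0 ?addr_ge0 ?sqr_ge0 //.
Qed.

Lemma metzler_hurwitz (N : nat) (M : 'M[R]_N) (v : 'rV[R]_N) (z : R[i]) :
  (forall i k, i != k -> 0 <= M i k) ->
  (forall k, 0 <= v 0 k) ->
  (forall k, (v *m M) 0 k < 0) ->
  eigenvalue (map_mx (real_complex R) M) z -> @complex.Re R z < 0.
Proof.
move=> hM hv0 hvM /eigenvalueP [w hw wn0].
have vpos : forall k, 0 < v 0 k.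
  move=> k; rewrite lt_def hv0 andbT; apply/eqP => vk0.
  move: (hvM k); rewrite mxE (bigD1 k) //= vk0 mul0r add0r.
  rewrite ltNge sumr_ge0 // => i ik; rewrite mulr_ge0 ?hv0 ?hM //.
have [k0 wk0] : exists k0, w 0 k0 != 0.
  apply/existsP; apply: contraR wn0 => /existsPn H; apply/eqP/matrixP => i j.
  by rewrite ord1 mxE; apply/eqP; rewrite (negPn (H j)).
pose u k := normc (w 0 k).
have upos0 : 0 < u k0 by rewrite lt_def normc_ge0 andbT; apply: contra wk0 => /eqP/eq0_normc ->.
case: (arg_maxP (fun k => u k / v 0 k) (isT : predT k0)) => k _ kmax.
set t := u k / v 0 k.
have tpos : 0 < t by apply: lt_le_trans (kmax k0 isT); rewrite divr_gt0.
have uk : u k = t * v 0 k by rewrite /t mulrVK // unitfE gt_eqF.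
have ukpos : 0 < u k by rewrite uk mulr_gt0.
have ule : forall i, u i <= t * v 0 i.
  by move=> i; rewrite -ler_pdivrMr ?vpos //; exact: kmax.
have eqk : (z - (M k k)%:C%C) * w 0 k = \sum_(i | i != k) w 0 i * (M i k)%:C%C.
  move/matrixP: (hw) => /(_ 0 k); rewrite !mxE (bigD1 k) //= mxE => e.
  rewrite mulrBl -e mulrC addrAC subrr add0r.
  by apply: eq_bigr => i _; rewrite mxE.
have H1 : normc (z - (M k k)%:C%C) * u k <= t * ((v *m M) 0 k - v 0 k * M k k).
  rewrite -normcM eqk; apply: le_trans; first exact: normc_sum.
  rewrite [X in t * (X - _)]mxE [X in t * (X - _)](bigD1 k) //= addrAC subrr add0r mulr_sumr; apply: ler_sum => i ik.
  rewrite normcM normc_real ger0_norm ?hM //.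
  by rewrite mulrA; apply: ler_wpM2r; [exact: hM | exact: ule].
have H2 : normc (z - (M k k)%:C%C) * u k < - (M k k) * u k.
  apply: le_lt_trans H1 _; rewrite uk.
  have h : t * (v *m M) 0 k < 0 by rewrite pmulr_rlt0 // hvM.
  rewrite -subr_lt0; set a := (v *m M) 0 k.
  have -> : t * (a - v 0 k * M k k) - - M k k * (t * v 0 k) = t * a by ring.
  exact: h.
rewrite ltr_pM2r // in H2.
have := Re_le_normc (z - (M k k)%:C%C); rewrite raddfB /= => H3.
have := le_lt_trans H3 H2; rewrite ltrBlDr addNr //.
Qed.
End Gen.
Lemma mxdiag_offdiag (R : rcfType) (n Qn : nat) (d : 'I_Qn -> R)
  (i k : 'I_(\sum_(q < Qn) n)) : i != k ->
  (\mxdiag_(q < Qn) ((d q)%:M : 'M[R]_n)) i k = 0.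
Proof.
rewrite -(can_eq tagnat.sigK) /mxdiag mxE /tagnat.sig1 /tagnat.sig2.
case: (tagnat.sig i) (tagnat.sig k) => [/= a j] [/= a' j'].
move=> H; case: ifP => [/eqP e|_]; last by rewrite mxE.
subst a'; rewrite conform_mx_id mxE; move: H; rewrite eq_Tagged /= => /negbTE ->.
by [].
Qed.

Lemma shsR_ge0 (R : rcfType) (n Qn L : nat) (src dst : 'I_L -> 'I_Qn)
  (lam : 'I_L -> R) (A : 'I_L -> 'M[R]_n) i k :
  (forall l, 0 < lam l) -> (forall l, reset_mx (A l)) ->
  0 <= shsR src dst lam A i k.
Proof.
move=> hlam hA; rewrite /shsR /mxblock mxE summxE; apply: sumr_ge0 => l _.
rewrite mxE; apply: mulr_ge0; first exact: ltW.
by case: ((hA l).1 (tagnat.sig2 i) (tagnat.sig2 k)) => ->.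
Qed.

Theorem lemma2 (R : rcfType) (n Qn L : nat) (src dst : 'I_L -> 'I_Qn)
  (lam : 'I_L -> R) (A : 'I_L -> 'M[R]_n) (pi : 'rV[R]_Qn)
  (v1 : 'rV[R]_(\sum_(q < Qn) n)) :
  (forall l, 0 < lam l) ->
  (forall l, reset_mx (A l)) ->
  stationary_dist src dst lam pi ->
  (forall k, 0 < shsv0 n pi 0 k) ->
  (forall k, 0 <= v1 0 k) ->
  v1 *m shsD n src lam = shsv0 n pi + v1 *m shsR src dst lam A ->
  forall z : R[i],
    eigenvalue (map_mx (real_complex R) (shsR src dst lam A - shsD n src lam)) z ->
    @complex.Re R z < 0.
Proof.
move=> hlam hA _ hv0 hv1 heq z hz.
apply: (@metzler_hurwitz R _ _ v1) hz.
- move=> i k ik; rewrite mxE /shsD [X in _ + X]mxE mxdiag_offdiag // oppr0 addr0.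
  exact: shsR_ge0.
- exact: hv1.
- move=> k; rewrite mulmxBr heq opprD addrCA subrr addr0 mxE oppr_lt0.
  exact: hv0.
Qed.
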